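(* Consider negligible unlearning cost ($\theta_i=0$ for all $i$), $d_i^{\max}=d^{\max}$ for all $i$, and $m_1<\dots<m_I$ with $m_i=(\xi_i\ell_i)^{-1}-\epsilon_i$. Let $d^a$ denote the unique Nash equilibrium of the allowing game. (1) Suppose some $j\in\mathcal I$ satisfies $(I-j)d^{\max}<m_j<(I-j+1)d^{\max}$ (so $d^a_i=0$ for $i<j$, $d^a_j=m_j-(I-j)d^{\max}\in(0,d^{\max})$, $d^a_i=d^{\max}$ for $i>j$), and $$\ln\frac{(I-j+1)d^{\max}+\epsilon_i}{(I-j)d^{\max}+\epsilon_i}\ge\xi_i\ell_i d^{\max}\quad\text{for all } i\in\{j,\dots,I\}.$$ Then the profile $d^f$ with $d^f_i=0$ for $i<j$ and $d^f_i=d^{\max}$ for $i\ge j$ is a Nash equilibrium of the forbidding game; user $j$'s payoff at $d^f$ is strictly lower than at $d^a$, every other user's payoff at $d^f$ is strictly higher than at $d^a$, and $\sum_i d^f_i>\sum_i d^a_i$. (2) Suppose some $j\in\mathcal I$ satisfies $(I-j)d^{\max}<m_j<(I-j+1)d^{\max}$ and $$\ln\frac{(I-j+1)d^{\max}+\epsilon_i}{(I-j)d^{\max}+\epsilon_i}\le\xi_i\ell_i d^{\max}\quad\text{for all } i\in\{1,\dots,j\}.$$ Then the profile $d^f$ with $d^f_i=0$ for $i\le j$ and $d^f_i=d^{\max}$ for $i>j$ is a Nash equilibrium of the forbidding game; every user's payoff at $d^f$ is strictly lower than at $d^a$, and $\sum_i d^f_i<\sum_i d^a_i$. (3) If no $j\in\mathcal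 I$ satisfies $(I-j)d^{\max}\le m_j\le(I-j+1)d^{\max}$, then $d^a$ (in which every user chooses $0$ or $d^{\max}$) is a Nash equilibrium of the forbidding game; hence all users' payoffs and the total remaining data size coincide in the two games at this equilibrium.
   Context: Allowing game (negligible unlearning cost): a finite set of users $\mathcal I=\{1,\dots,I\}$, $I\ge 2$, each with parameters $d_i^{\max}>0$, $\epsilon_i>0$, $\xi_i>0$, $\ell_i>0$; each user chooses $d_i\in[0,d_i^{\max}]$ (data kept), with payoff $U_i(d_i,\boldsymbol{d_{-i}})=\ln\big(\sum_{j\in\mathcal I}d_j+\epsilon_i\big)-\xi_i d_i\ell_i$. Under the stated hypotheses ($d_i^{\max}=d^{\max}$, strictly increasing $m_i$) this game has a unique Nash equilibrium. Forbidding game: same payoffs but strategy set $\{0,d_i^{\max}\}$ for each user $i$. In either game a (pure) Nash equilibrium is a profile from which no user can strictly increase its payoff by unilaterally switching to another strategy in its own strategy set. *)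

(* Defs.v *)
From HB Require Import structures.
From mathcomp Require Import all_boot all_order all_algebra.
From mathcomp Require Import all_classical all_reals all_analysis.
Set Implicit Arguments. Unset Strict Implicit. Unset Printing Implicit Defensive.
Import Order.TTheory GRing.Theory Num.Theory.
Local Open Scope ring_scope.

(* Users are the naturals 1..I (paper indexing); a profile is d : nat -> R,
   only its values at 1..I matter. *)
Section Game.
Variable R : realType.
Variable I : nat.
Variables (eps xi ell : nat -> R).

Definition total_data (d : nat -> R) : R := \sum_(1 <= k < I.+1) d k.

Definition ul_payoff (d : nat -> R) (i : nat) : R :=
  ln (total_data d + eps i) - xi i * d i * ell i.

Definition ul_upd (d : nat -> R) (i : nat) (x : R) : nat -> R :=
  fun k => if k == i then x else d k.

Definition ul_m (i : nat) : R := (xi i * ell i)^-1 - eps i.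

Definition ul_user (i : nat) : bool := (1 <= i <= I)%N.

Definition is_NE (S : nat -> R -> Prop) (d : nat -> R) : Prop :=
  (forall i, ul_user i -> S i (d i)) /\
  (forall i, ul_user i -> forall x, S i x -> ul_payoff (ul_upd d i x) i <= ul_payoff d i).

Definition allow_NE (dmaxv : nat -> R) (d : nat -> R) : Prop :=
  is_NE (fun i x => 0 <= x <= dmaxv i) d.

Definition forbid_NE (dmaxv : nat -> R) (d : nat -> R) : Prop :=
  is_NE (fun i x => x = 0 \/ x = dmaxv i) d.

End Game.

(* Main.v *)
Require Import Defs.
From HB Require Import structures.
From mathcomp Require Import all_boot all_order all_algebra.
From mathcomp Require Import all_classical all_reals all_analysis.
From mathcomp Require Import ring lra zify.
Set Implicit Arguments. Unset Strict Implicit.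
Import Order.TTheory GRing.Theory Num.Theory.
Local Open Scope ring_scope.

Lemma ln_sub_le (R : realType) (y z : R) : 0 < y -> 0 < z ->
  ln z - ln y <= (z - y) / y.
Proof.
move=> y0 z0; rewrite -ln_div ?posrE //.
have h : -1 < z / y - 1 by have := divr_gt0 z0 y0; lra.
have := le_ln1Dx h.
have -> : 1 + (z / y - 1) = z / y by ring.
have -> : z / y - 1 = (z - y) / y by field; lra.
done.
Qed.

Lemma ln_sub_lt (R : realType) (y z : R) : 0 < y -> 0 < z -> z != y ->
  ln z - ln y < (z - y) / y.
Proof.
move=> y0 z0 zy.
pose w := (y + z) / 2.
have w0 : 0 < w by rewrite /w; lra.
have h1 := ln_sub_le w0 z0.
have h2 := ln_sub_le y0 w0.
have key : (z - w) / w - (z - w) / y = - ((z - y) ^+ 2 / (2 * (y + z) * y)).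
  rewrite /w; field; lra.
have sq : 0 < (z - y) ^+ 2 / (2 * (y + z) * y).
  apply: divr_gt0; last by apply: mulr_gt0 => //; lra.
  by rewrite lt0r sqrf_eq0 subr_eq0 zy sqr_ge0.
have -> : (z - y) / y = (z - w) / y + (w - y) / y by rewrite /w; field; lra.
lra.
Qed.
Lemma total_ext (R : realType) I (d d' : nat -> R) :
  (forall k, ul_user I k -> d k = d' k) -> total_data I d = total_data I d'.
Proof. by move=> h; apply: eq_big_nat => k hk; apply: h. Qed.

Lemma total_le (R : realType) I (d d' : nat -> R) :
  (forall k, ul_user I k -> d k <= d' k) -> total_data I d <= total_data I d'.
Proof. by move=> h; apply: ler_sum_nat => k hk; apply: h. Qed.

Lemma total_step (R : realType) I j (c : R) : (1 <= j <= I.+1)%N ->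
  total_data I (fun k => if (k < j)%N then 0 else c) = (I.+1 - j)%:R * c.
Proof.
case/andP=> j1 jI; rewrite /total_data (big_cat_nat j1 jI) /=.
rewrite big1_seq; last first.
  by move=> k /andP[_]; rewrite mem_index_iota => /andP[_ ->].
rewrite add0r (eq_big_nat _ _ (F2 := fun _ => c)); last first.
  by move=> k /andP[jk _]; rewrite ltnNge jk.
by rewrite sumr_const_nat mulr_natl.
Qed.

Lemma total_upd (R : realType) I (d : nat -> R) i x : ul_user I i ->
  total_data I (ul_upd d i x) = total_data I d - d i + x.
Proof.
move=> /andP[i1 iI].
rewrite /total_data (eq_big_nat _ _ (F2 := fun k => d k + (if k == i then x - d i else 0))); last first.
  by move=> k _; rewrite /ul_upd; case: eqP => [->|_]; [ring | ring].
rewrite big_split /=.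
have iI' : (i <= I.+1)%N by apply: leq_trans iI _.
suff -> : \sum_(1 <= k < I.+1) (if k == i then x - d i else 0) = x - d i by ring.
rewrite (big_cat_nat i1 iI') /= big1_seq; last first.
  move=> k /andP[_]; rewrite mem_index_iota => /andP[_ hk].
  by rewrite (ltn_eqF hk).
rewrite big_ltn //= eqxx big1_seq; last first.
  move=> k /andP[_]; rewrite mem_index_iota => /andP[hk _].
  by rewrite (gtn_eqF hk).
ring.
Qed.

Lemma payoff_upd (R : realType) I (eps xi ell d : nat -> R) i x : ul_user I i ->
  ul_payoff I eps xi ell (ul_upd d i x) i =
  ln (total_data I d - d i + x + eps i) - xi i * x * ell i.
Proof. by move=> hi; rewrite /ul_payoff total_upd // /ul_upd eqxx. Qed.

Lemma inv_lt (R : realType) (a b : R) : 0 < a -> 0 < b -> a < b -> b^-1 < a^-1.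
Proof. by move=> a0 b0 ab; rewrite ltf_pV2 ?posrE. Qed.

Lemma ne_char (R : realType) I (dmaxv eps xi ell d : nat -> R) i :
  ul_user I i -> 0 < eps i -> 0 < xi i -> 0 < ell i ->
  allow_NE I eps xi ell dmaxv d ->
  (d i < dmaxv i -> ul_m eps xi ell i <= total_data I d) /\
  (0 < d i -> total_data I d <= ul_m eps xi ell i).
Proof.
move=> ui e0 x0 l0 [hS hD].
have d0 : forall k, ul_user I k -> 0 <= d k by move=> k /hS /andP[].
have /andP[di0 dim] := hS i ui.
set S := total_data I d.
have Sdi : 0 <= S - d i.
  have := total_upd d 0 ui; rewrite addr0 => <-.
  rewrite /total_data big_nat; apply: sumr_ge0 => k uk.
  rewrite /ul_upd; case: eqP => _; [exact: lexx | exact: d0].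
set c := xi i * ell i.
have c0 : 0 < c by apply: mulr_gt0.
set K := c^-1.
have K0 : 0 < K by rewrite invr_gt0.
have cK : c = K^-1 by rewrite invrK.
have mE : ul_m eps xi ell i = K - eps i by [].
set A := S - d i + eps i.
have A0 : 0 < A by rewrite /A; lra.
have dev : forall x, 0 <= x <= dmaxv i ->
    ln (A + x) - c * x <= ln (A + d i) - c * d i.
  move=> x hx; have := hD i ui x hx.
  rewrite payoff_upd // /ul_payoff.
  have -> : A + d i = S + eps i by rewrite /A; ring.
  have -> : S - d i + x + eps i = A + x by rewrite /A; ring.
  by rewrite /c (mulrAC (xi i) x) (mulrAC (xi i) (d i)).
split.
- move=> dlt; rewrite mE; rewrite leNgt; apply/negP => Slt.
  have [δ [δ0 [δ1 δ2]]] : exists δ, 0 < δ /\ δ <= dmaxv i - d i /\ δ <= K - eps i - S.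
    case: (lerP (dmaxv i - d i) (K - eps i - S)) => h.
      by exists (dmaxv i - d i); split; lra.
    by exists (K - eps i - S); split; lra.
  pose x := d i + δ / 2.
  have hx : 0 <= x <= dmaxv i by apply/andP; rewrite /x; split; lra.
  have Ax0 : 0 < A + x by rewrite /x; lra.
  have AxK : A + x < K by rewrite /A /x; lra.
  have pc : c < (A + x)^-1 by rewrite cK; apply: inv_lt.
  have Ad0 : 0 < A + d i by lra.
  have hl := ln_sub_le Ax0 Ad0.
  have hl' : ln (A + d i) - ln (A + x) <= - ((x - d i) * (A + x)^-1).
    move: hl; have -> : (A + d i - (A + x)) / (A + x) = - ((x - d i) * (A + x)^-1) by ring.
    done.
  have xd0 : 0 < x - d i by rewrite /x; lra.
  have := ltr_pM2l xd0 c (A + x)^-1; rewrite pc => /esym hm.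
  have := dev x hx; lra.
- move=> dpos; rewrite mE; rewrite leNgt; apply/negP => Slt.
  have [δ [δ0 [δ1 δ2]]] : exists δ, 0 < δ /\ δ <= d i /\ δ <= S - (K - eps i).
    case: (lerP (d i) (S - (K - eps i))) => h.
      by exists (d i); split; lra.
    by exists (S - (K - eps i)); split; lra.
  pose x := d i - δ / 2.
  have hx : 0 <= x <= dmaxv i by apply/andP; rewrite /x; split; lra.
  have Ax0 : 0 < A + x by rewrite /x; lra.
  have AxK : K < A + x by rewrite /A /x; lra.
  have pc : (A + x)^-1 < c by rewrite cK; apply: inv_lt.
  have Ad0 : 0 < A + d i by lra.
  have hl := ln_sub_le Ax0 Ad0.
  have hl' : ln (A + d i) - ln (A + x) <= (d i - x) * (A + x)^-1.
    by move: hl; have -> : (A + d i - (A + x)) / (A + x) = (d i - x) * (A + x)^-1 by ring.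
  have xd0 : 0 < d i - x by rewrite /x; lra.
  have := ltr_pM2l xd0 (A + x)^-1 c; rewrite pc => /esym hm.
  have := dev x hx; lra.
Qed.

Lemma f_mono (R : realType) I (f : nat -> R) :
  (forall i, (1 <= i)%N -> (i < I)%N -> f i < f i.+1) ->
  forall k l, (1 <= k)%N -> (k < l)%N -> (l <= I)%N -> f k < f l.
Proof.
move=> h k l k1; elim: l => // l IH kl lI.
rewrite ltnS leq_eqVlt in kl; case/orP: kl => [/eqP kl|kl].
  by rewrite -kl; apply: h => //; lia.
apply: lt_trans (IH kl (ltnW lI)) (h l _ _); lia.
Qed.

Lemma LA (R : realType) (y K dm : R) : 0 < dm -> 0 < K -> K < y ->
  ln (y + dm) - K^-1 * dm <= ln y.
Proof.
move=> d0 K0 Ky; have y0 : 0 < y by lra.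
have yd : 0 < y + dm by lra.
have := ln_sub_le y0 yd.
have -> : (y + dm - y) / y = dm * y^-1 by ring.
have := inv_lt K0 y0 Ky => iv.
have := ltr_pM2l d0 (y^-1) (K^-1); rewrite iv => /esym h.
lra.
Qed.

Lemma LB (R : realType) (y K dm : R) : 0 < dm -> 0 < y - dm -> y < K ->
  ln (y - dm) <= ln y - K^-1 * dm.
Proof.
move=> d0 yd yK; have y0 : 0 < y by lra.
have K0 : 0 < K by lra.
have := ln_sub_le y0 yd.
have -> : (y - dm - y) / y = - (dm * y^-1) by ring.
have := inv_lt y0 K0 yK => iv.
have := ltr_pM2l d0 (K^-1) (y^-1); rewrite iv => /esym h.
lra.
Qed.

Lemma natS_mul (R : realType) n (d : R) : (n.+1)%:R * d = n%:R * d + d.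
Proof. by rewrite mulrSr mulrDl mul1r. Qed.

Section Main.
Variables (R : realType) (I : nat) (dmaxv eps xi ell : nat -> R) (dmax : R) (da : nat -> R).
Hypothesis I2 : (2 <= I)%N.
Hypothesis hpos : forall i, ul_user I i -> [/\ 0 < dmaxv i, 0 < eps i, 0 < xi i & 0 < ell i].
Hypothesis hdm : forall i, ul_user I i -> dmaxv i = dmax.
Hypothesis hmon : forall i, (1 <= i)%N -> (i < I)%N -> ul_m eps xi ell i < ul_m eps xi ell i.+1.
Hypothesis hNE : allow_NE I eps xi ell dmaxv da.

Local Notation m := (ul_m eps xi ell).
Local Notation S := (total_data I da).

Lemma dmax0 : 0 < dmax.
Proof.
have u1 : ul_user I 1 by rewrite /ul_user; apply/andP; split => //; lia.
by have [h _ _ _] := hpos u1; rewrite -(hdm u1).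
Qed.

Lemma mlt k l : ul_user I k -> ul_user I l -> (k < l)%N -> m k < m l.
Proof. move=> /andP[k1 _] /andP[_ lI] kl; exact: f_mono hmon _ _ k1 kl lI. Qed.

Lemma char2 i : ul_user I i -> (da i < dmax -> m i <= S) /\ (0 < da i -> S <= m i).
Proof.
move=> ui; have [_ e0 x0 l0] := hpos ui.
by have := ne_char ui e0 x0 l0 hNE; rewrite hdm.
Qed.

Lemma bnds i : ul_user I i -> 0 <= da i <= dmax.
Proof. by move=> ui; rewrite -(hdm ui); case: hNE => h _; apply: h. Qed.

Lemma struct j : ul_user I j -> S = m j ->
  (forall k, ul_user I k -> (k < j)%N -> da k = 0) /\
  (forall k, ul_user I k -> (j < k)%N -> da k = dmax).
Proof.
move=> uj Sm; split => k uk kj.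
- have mk := mlt uk uj kj; have [_ h] := char2 uk; have /andP[b1 b2] := bnds uk.
  apply/eqP; rewrite eq_le b1 andbT leNgt; apply/negP => /h; lra.
- have mk := mlt uj uk kj; have [h _] := char2 uk; have /andP[b1 b2] := bnds uk.
  apply/eqP; rewrite eq_le b2 /= leNgt; apply/negP => /h; lra.
Qed.

Lemma daj j : ul_user I j -> S = m j -> da j = m j - (I - j)%:R * dmax.
Proof.
move=> uj Sm; have [h1 h2] := struct uj Sm.
have := total_upd da 0 uj.
rewrite (@total_ext _ _ _ (fun k => if (k < j.+1)%N then 0 else dmax)); last first.
  move=> k uk; rewrite /ul_upd; case: eqP => [->|/eqP kj]; first by rewrite ltnSn.
  case: (ltngtP k j) => [kj'|kj'|kj']; last by rewrite kj' eqxx in kj.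
  - by rewrite h1 // ltnS ltnW.
  - by rewrite h2 // ltnNge kj'.
have uj' := uj; move/andP: uj' => [j1 jI].
rewrite total_step; last by apply/andP; split; lia.
rewrite subSS; lra.
Qed.

Lemma Seq j : ul_user I j -> (I - j)%:R * dmax < m j < (I - j).+1%:R * dmax -> S = m j.
Proof.
move=> uj /andP[lo hi]; have /andP[j1 jI] := uj.
case: (ltgtP S (m j)) => // h.
- have : total_data I (fun k => if (k < j)%N then 0 else dmax) <= S.
    apply: total_le => k uk; case: ltnP => kj; first by case/andP: (bnds uk).
    have mk : m j <= m k.
      case: (ltngtP j k) => jk; [exact: ltW (mlt uj uk jk) | lia | by rewrite jk].
    have [h1 _] := char2 uk; have /andP[_ b2] := bnds uk.
    rewrite leNgt; apply/negP => /h1; lra.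
  rewrite total_step; last by apply/andP; split; lia.
  rewrite subSn //; lra.
- have : S <= total_data I (fun k => if (k < j.+1)%N then 0 else dmax).
    apply: total_le => k uk; case: ltnP => kj; last by case/andP: (bnds uk).
    have mk : m k <= m j.
      case: (ltngtP k j) => jk; [exact: ltW (mlt uk uj jk) | lia | by rewrite jk].
    have [_ h2] := char2 uk; have /andP[b1 _] := bnds uk.
    rewrite leNgt; apply/negP => /h2; lra.
  rewrite total_step; last by apply/andP; split; lia.
  rewrite subSS; lra.
Qed.

Definition Kf i := ((xi i * ell i)^-1).
Local Notation K i := (Kf i).

Lemma payE d i : ul_payoff I eps xi ell d i = ln (total_data I d + eps i) - (K i)^-1 * d i.
Proof. by rewrite /ul_payoff /Kf invrK mulrAC. Qed.

Lemma payU d i x : ul_user I i -> ul_payoff I eps xi ell (ul_upd d i x) i =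
  ln (total_data I d - d i + x + eps i) - (K i)^-1 * x.
Proof. by move=> ui; rewrite payoff_upd // /Kf invrK mulrAC. Qed.

Lemma K0 i : ul_user I i -> 0 < K i.
Proof. by move=> ui; have [_ _ x0 l0] := hpos ui; rewrite /Kf invr_gt0 mulr_gt0. Qed.

Lemma e0 i : ul_user I i -> 0 < eps i.
Proof. by move=> ui; have [_ h _ _] := hpos ui. Qed.

Lemma KK i : ul_user I i -> K i * (K i)^-1 = 1.
Proof. by move=> ui; rewrite divff // gt_eqF // K0. Qed.

Lemma part1 j : ul_user I j ->
     (I - j)%:R * dmax < m j < (I - j).+1%:R * dmax ->
     (forall i, (j <= i <= I)%N ->
        xi i * ell i * dmax <=
        ln (((I - j).+1%:R * dmax + eps i) / ((I - j)%:R * dmax + eps i))) ->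
     let df := fun i : nat => if (i < j)%N then 0 else dmax in
     [/\ forbid_NE I eps xi ell dmaxv df,
         ul_payoff I eps xi ell df j < ul_payoff I eps xi ell da j,
         (forall i, ul_user I i -> i != j ->
            ul_payoff I eps xi ell da i < ul_payoff I eps xi ell df i)
       & total_data I da < total_data I df].
Proof.
move=> uj hr hln df.
have Sm := Seq uj hr; have [h1 h2] := struct uj Sm; have dj := daj uj Sm.
have /andP[j1 jI] := uj.
have d0 := dmax0.
set T0 := (I - j)%:R * dmax.
have T00 : 0 <= T0 by rewrite /T0 mulr_ge0 // ?ler0n // ltW.
have Tdf : total_data I df = T0 + dmax.
  by rewrite total_step ?subSn // ?natS_mul //; apply/andP; split; lia.
move: hr; rewrite natS_mul -/T0 => /andP[lo hi].
have mE : forall i, m i = K i - eps i by [].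
split.
- split.
  + by move=> i ui; rewrite /df hdm //; case: ltnP; [left|right].
  + move=> i ui x hx; have ei := e0 ui; have Ki := K0 ui.
    have {hx} [-> | ->] : x = 0 \/ x = dmax by case: hx => ->; [left | right; rewrite hdm].
    * rewrite payU // payE Tdf /df; case: ltnP => ij.
        by rewrite subr0 addr0.
      have /andP[_ iI] := ui.
      have := hln i (ltac:(apply/andP; split; done)); rewrite natS_mul -/T0 ln_div ?posrE; try lra.
      rewrite /Kf invrK mulrAC -/(Kf i).
      have -> : T0 + dmax - dmax + 0 + eps i = T0 + eps i by ring.
      lra.
    * rewrite payU // payE Tdf /df; case: ltnP => ij; last first.
        by rewrite subrK.
      have mij := mlt ui uj ij.
      have hK : K i < T0 + dmax + eps i by have := mE i; lra.
      have hLA := LA d0 Ki hK.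
      have -> : T0 + dmax - 0 + dmax + eps i = T0 + dmax + eps i + dmax by ring.
      by rewrite mulr0 subr0.
- rewrite !payE Tdf /df ltnn dj Sm mE.
  have ej := e0 uj; have Kj := K0 uj; have kk := KK uj.
  have Tne : T0 + dmax + eps j != K j by apply/eqP => hh; have := mE j; lra.
  have Tp : 0 < T0 + dmax + eps j by lra.
  have := ln_sub_lt Kj Tp Tne.
  have -> : K j - eps j + eps j = K j by ring.
  by rewrite -/T0; lra.
- move=> i ui ij; rewrite !payE Tdf Sm /df mE.
  have ei := e0 ui; have Kj := K0 uj; have ej := e0 uj.
  suff : ln (K j - eps j + eps i) < ln (T0 + dmax + eps i).
    case: ltnP => ij'.
      rewrite h1 //; lra.
    rewrite h2; first lra; first done.
    by rewrite ltn_neqAle eq_sym ij ij'.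
  rewrite ltr_ln ?posrE; rewrite mE in lo hi; lra.
- rewrite Tdf Sm; lra.
Qed.

Lemma part2 j : ul_user I j ->
     (I - j)%:R * dmax < m j < (I - j).+1%:R * dmax ->
     (forall i, (1 <= i <= j)%N ->
        ln (((I - j).+1%:R * dmax + eps i) / ((I - j)%:R * dmax + eps i))
        <= xi i * ell i * dmax) ->
     let df := fun i : nat => if (i <= j)%N then 0 else dmax in
     [/\ forbid_NE I eps xi ell dmaxv df,
         (forall i, ul_user I i ->
            ul_payoff I eps xi ell df i < ul_payoff I eps xi ell da i)
       & total_data I df < total_data I da].
Proof.
move=> uj hr hln df.
have Sm := Seq uj hr; have [h1 h2] := struct uj Sm; have dj := daj uj Sm.
have /andP[j1 jI] := uj.
have d0 := dmax0.
set T0 := (I - j)%:R * dmax.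
have T00 : 0 <= T0 by rewrite /T0 mulr_ge0 // ?ler0n // ltW.
have Tdf : total_data I df = T0.
  change (total_data I (fun k => if (k < j.+1)%N then 0 else dmax) = T0).
  by rewrite total_step ?subSS //; apply/andP; split; lia.
move: hr; rewrite natS_mul -/T0 => /andP[lo hi].
have mE : forall i, m i = K i - eps i by [].
split.
- split.
  + by move=> i ui; rewrite /df hdm //; case: leqP; [left|right].
  + move=> i ui x hx; have ei := e0 ui; have Ki := K0 ui.
    have {hx} [-> | ->] : x = 0 \/ x = dmax by case: hx => ->; [left | right; rewrite hdm].
    * rewrite payU // payE Tdf /df; case: leqP => ij.
        by rewrite subr0 addr0.
      have mij := mlt uj ui ij.
      have hK : T0 + eps i < K i by have := mE i; lra.
      have IJ : (1 <= I - j)%N by have /andP[_ iI] := ui; lia.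
      have T0d : dmax <= T0.
        rewrite /T0 -subr_ge0.
        have -> : (I - j)%:R * dmax - dmax = ((I - j)%:R - 1) * dmax by ring.
        by apply: mulr_ge0; [rewrite subr_ge0 ler1n | exact: ltW].
      have hLB := LB d0 (_ : 0 < T0 + eps i - dmax) hK.
      have -> : T0 - dmax + 0 + eps i = T0 + eps i - dmax by ring.
      rewrite mulr0 subr0; apply: hLB; lra.
    * rewrite payU // payE Tdf /df; case: leqP => ij; last by rewrite subrK.
      have /andP[i1 _] := ui.
      have := hln i (ltac:(apply/andP; split; done)); rewrite natS_mul -/T0 ln_div ?posrE; try lra.
      rewrite /Kf invrK mulrAC -/(Kf i).
      have -> : T0 - 0 + dmax + eps i = T0 + dmax + eps i by ring.
      lra.
- move=> i ui; rewrite !payE Tdf Sm /df mE.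
  have ei := e0 ui; have Kj := K0 uj; have ej := e0 uj.
  case: (ltngtP i j) => ij.
  + rewrite h1 // ?(ltnW ij) /=.
    suff : ln (T0 + eps i) < ln (K j - eps j + eps i) by lra.
    rewrite ltr_ln ?posrE; have := mE j; lra.
  + rewrite h2 // ?leqNgt ?ij /=.
    suff : ln (T0 + eps i) < ln (K j - eps j + eps i) by lra.
    rewrite ltr_ln ?posrE; have := mE j; lra.
  + rewrite ij ?leqnn /= dj mE.
    have kk := KK uj.
    have Tne : T0 + eps j != K j by apply/eqP => hh; have := mE j; lra.
    have Tp : 0 < T0 + eps j by lra.
    have := ln_sub_lt Kj Tp Tne.
    have -> : K j - eps j + eps j = K j by ring.
    by rewrite -/T0; lra.
- rewrite Tdf Sm; lra.
Qed.

Lemma part3 :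
  (forall j, ul_user I j ->
      ~ ((I - j)%:R * dmax <= m j <= (I - j).+1%:R * dmax)) ->
   (forall i, ul_user I i -> da i = 0 \/ da i = dmax) /\
   forbid_NE I eps xi ell dmaxv da.
Proof.
move=> hno.
have key : forall i, ul_user I i -> da i = 0 \/ da i = dmax.
  move=> i ui; have /andP[b1 b2] := bnds ui.
  case: (ltrP 0 (da i)) => p; last by left; apply/eqP; rewrite eq_le p b1.
  case: (ltrP (da i) dmax) => q; last by right; apply/eqP; rewrite eq_le q b2.
  have [c1 c2] := char2 ui.
  have Sm : S = m i by apply/eqP; rewrite eq_le (c2 p) (c1 q).
  have di := daj ui Sm.
  exfalso; apply: (hno i ui); rewrite natS_mul; apply/andP; split; lra.
split => //; split.
- by move=> i ui; rewrite hdm //; exact: key.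
- move=> i ui x hx; case: hNE => _ hD; apply: hD => //.
  have d0 := dmax0.
  by case: hx => ->; rewrite hdm // ?lexx ?ltW.
Qed.

End Main.

Theorem corollary2 (R : realType) (I : nat) (dmaxv eps xi ell : nat -> R)
    (dmax : R) (da : nat -> R) :
  (2 <= I)%N ->
  (forall i, ul_user I i ->
     [/\ 0 < dmaxv i, 0 < eps i, 0 < xi i & 0 < ell i]) ->
  (* theta_i = 0 (built into ul_payoff) ; d_i^max = d^max *)
  (forall i, ul_user I i -> dmaxv i = dmax) ->
  (* m_1 < ... < m_I *)
  (forall i, (1 <= i)%N -> (i < I)%N -> ul_m eps xi ell i < ul_m eps xi ell i.+1) ->
  (* d^a : the (unique) Nash equilibrium of the allowing game *)
  allow_NE I eps xi ell dmaxv da ->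
  [/\
  (* (1) *)
  (forall j, ul_user I j ->
     (I - j)%:R * dmax < ul_m eps xi ell j < (I - j).+1%:R * dmax ->
     (forall i, (j <= i <= I)%N ->
        xi i * ell i * dmax <=
        ln (((I - j).+1%:R * dmax + eps i) / ((I - j)%:R * dmax + eps i))) ->
     let df := fun i : nat => if (i < j)%N then 0 else dmax in
     [/\ forbid_NE I eps xi ell dmaxv df,
         ul_payoff I eps xi ell df j < ul_payoff I eps xi ell da j,
         (forall i, ul_user I i -> i != j ->
            ul_payoff I eps xi ell da i < ul_payoff I eps xi ell df i)
       & total_data I da < total_data I df]),
  (* (2) *)
  (forall j, ul_user I j ->
     (I - j)%:R * dmax < ul_m eps xi ell j < (I - j).+1%:R * dmax ->
     (forall i, (1 <= i <= j)%N ->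
        ln (((I - j).+1%:R * dmax + eps i) / ((I - j)%:R * dmax + eps i))
        <= xi i * ell i * dmax) ->
     let df := fun i : nat => if (i <= j)%N then 0 else dmax in
     [/\ forbid_NE I eps xi ell dmaxv df,
         (forall i, ul_user I i ->
            ul_payoff I eps xi ell df i < ul_payoff I eps xi ell da i)
       & total_data I df < total_data I da])
  &
  (* (3) *)
  ((forall j, ul_user I j ->
      ~ ((I - j)%:R * dmax <= ul_m eps xi ell j <= (I - j).+1%:R * dmax)) ->
   (forall i, ul_user I i -> da i = 0 \/ da i = dmax) /\
   forbid_NE I eps xi ell dmaxv da)].
Proof.
move=> I2 hpos hdm hmon hNE; split.
- by move=> j; apply: part1.
- by move=> j; apply: part2.
- by apply: part3.
Qed.
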